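(* Let $F$ be a lens. Then the following are equivalent: (1) $F$ is an epimorphism in $\mathbf{Lens}$; (2) the get functor $UF$ is surjective on objects; (3) the get functor $UF$ is surjective on morphisms.
   Context: A lens $F\colon \mathbf{A}\to\mathbf{B}$ between small categories consists of a functor $F\colon\mathbf{A}\to\mathbf{B}$ (the get functor) together with, for each object $A$ of $\mathbf{A}$, a function $\varphi_{F,A}$ from the set of morphisms of $\mathbf{B}$ with domain $FA$ to the set of morphisms of $\mathbf{A}$ with domain $A$, such that: $F(\varphi_{F,A}b)=b$; $\varphi_{F,A}(\mathrm{id}_{FA})=\mathrm{id}_A$; and $\varphi_{F,A}(b'\circ b)=\varphi_{F,A'}(b')\circ\varphi_{F,A}(b)$ whenever $b$ has domain $FA$, $A'$ is the codomain of $\varphi_{F,A}b$, and $b'$ has domain $FA'$. $\mathbf{Lens}$ is the category of small categories and lenses, with composite of $F\colon\mathbf{A}\to\mathbf{B}$, $G\colon\mathbf{B}\to\mathbf{C}$ having get functor $G\circ F$ and puts $\varphi_{G\circ F,A}(c)=\varphi_{F,A}(\varphi_{G,FA}(c))$. $U\colon\mathbf{Lens}\to\mathbf{Cat}$ sends a lens to its get functor. *)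

(* Defs.v *)
Set Implicit Arguments.
Unset Strict Implicit.

Record Cat := {
  ob : Type;
  mor : Type;
  dom : mor -> ob;
  cod : mor -> ob;
  idm : ob -> mor;
  comp : mor -> mor -> mor;  (* comp g f = g o f, meaningful when cod f = dom g *)
  dom_idm : forall x, dom (idm x) = x;
  cod_idm : forall x, cod (idm x) = x;
  dom_comp : forall g f, cod f = dom g -> dom (comp g f) = dom f;
  cod_comp : forall g f, cod f = dom g -> cod (comp g f) = cod g;
  comp_idl : forall f, comp (idm (cod f)) f = f;
  comp_idr : forall f, comp f (idm (dom f)) = f;
  comp_assoc : forall h g f, cod f = dom g -> cod g = dom h ->
    comp h (comp g f) = comp (comp h g) f
}.

Record Functor (A B : Cat) := {
  fob : ob A -> ob B;
  fmor : mor A -> mor B;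
  fdom : forall f, dom (fmor f) = fob (dom f);
  fcod : forall f, cod (fmor f) = fob (cod f);
  fid : forall x, fmor (idm x) = idm (fob x);
  fcomp : forall g f, cod f = dom g -> fmor (comp g f) = comp (fmor g) (fmor f)
}.

(* A lens: a get functor together with put functions phi A : {b | dom b = F A}
   -> {a | dom a = A}.  phi is given as a total function; its values outside
   the domain dom b = F A are irrelevant (see lens_eq). *)
Record Lens (A B : Cat) := {
  get : Functor A B;
  put : ob A -> mor B -> mor A;
  put_dom : forall a b, dom b = fob get a -> dom (put a b) = a;
  put_get : forall a b, dom b = fob get a -> fmor get (put a b) = b;
  put_id : forall a, put a (idm (fob get a)) = idm a;
  put_comp : forall a b b', dom b = fob get a ->
    dom b' = fob get (cod (put a b)) ->
    put a (comp b' b) = comp (put (cod (put a b)) b') (put a b)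
}.

Section Composition.
Variables (A B C : Cat) (F : Functor A B) (G : Functor B C).

Definition functor_comp : Functor A C.
Proof.
  refine {| fob := fun x => fob G (fob F x); fmor := fun f => fmor G (fmor F f) |}.
  - intro f; now rewrite fdom, fdom.
  - intro f; now rewrite fcod, fcod.
  - intro x; now rewrite fid, fid.
  - intros g f H. rewrite fcomp by exact H. apply fcomp.
    now rewrite fcod, fdom, H.
Defined.
End Composition.

Section LensComposition.
Variables (A B C : Cat) (F : Lens A B) (G : Lens B C).

Lemma lc_put_dom : forall a c, dom c = fob (functor_comp (get F) (get G)) a ->
  dom (put F a (put G (fob (get F) a) c)) = a.
Proof. intros a c H. apply put_dom. apply put_dom. exact H. Qed.

Lemma lc_put_get : forall a c, dom c = fob (functor_comp (get F) (get G)) a ->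
  fmor (functor_comp (get F) (get G)) (put F a (put G (fob (get F) a) c)) = c.
Proof.
  intros a c H. simpl. rewrite put_get. apply put_get. exact H.
  apply put_dom. exact H.
Qed.

Lemma lc_put_id : forall a,
  put F a (put G (fob (get F) a) (idm (fob (functor_comp (get F) (get G)) a)))
  = idm a.
Proof. intro a. simpl. rewrite put_id. apply put_id. Qed.

Lemma lc_put_comp : forall a c c',
  dom c = fob (functor_comp (get F) (get G)) a ->
  dom c' = fob (functor_comp (get F) (get G))
             (cod (put F a (put G (fob (get F) a) c))) ->
  put F a (put G (fob (get F) a) (comp c' c)) =
  comp (put F (cod (put F a (put G (fob (get F) a) c)))
          (put G (fob (get F) (cod (put F a (put G (fob (get F) a) c)))) c'))
       (put F a (put G (fob (get F) a) c)).
Proof.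
  intros a c c' Hc Hc'. simpl in *.
  set (b := put G (fob (get F) a) c) in *.
  assert (Hb : dom b = fob (get F) a) by (apply put_dom; exact Hc).
  set (a' := cod (put F a b)) in *.
  assert (Ha' : fob (get F) a' = cod b).
  { unfold a'. rewrite <- fcod. rewrite put_get by exact Hb. reflexivity. }
  rewrite Ha' in Hc'.
  rewrite (@put_comp _ _ G); [| exact Hc | exact Hc'].
  rewrite Ha'.
  apply (@put_comp _ _ F). exact Hb.
  rewrite put_dom; [symmetry; exact Ha' | exact Hc'].
Qed.

Definition lens_comp : Lens A C :=
  {| get := functor_comp (get F) (get G);
     put := fun a c => put F a (put G (fob (get F) a) c);
     put_dom := lc_put_dom; put_get := lc_put_get;
     put_id := lc_put_id; put_comp := lc_put_comp |}.
End LensComposition.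

Definition lens_eq (A B : Cat) (F G : Lens A B) : Prop :=
  (forall x, fob (get F) x = fob (get G) x) /\
  (forall f, fmor (get F) f = fmor (get G) f) /\
  (forall a b, dom b = fob (get F) a -> put F a b = put G a b).

Definition lens_epi (A B : Cat) (F : Lens A B) : Prop :=
  forall (C : Cat) (G H : Lens B C),
    lens_eq (lens_comp F G) (lens_comp F H) -> lens_eq G H.

Definition surj_ob (A B : Cat) (F : Functor A B) : Prop :=
  forall y : ob B, exists x : ob A, fob F x = y.

Definition surj_mor (A B : Cat) (F : Functor A B) : Prop :=
  forall g : mor B, exists f : mor A, fmor F f = g.

(* Main.v *)
Require Import Defs.
From Stdlib Require Import ClassicalEpsilon Classical Bool.
Set Implicit Arguments.
Unset Strict Implicit.

Definition img (A B : Cat) (F : Lens A B) (x : ob B) : bool :=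
  if excluded_middle_informative (exists a, fob (get F) a = x) then true else false.

Lemma imgP (A B : Cat) (F : Lens A B) x : img F x = true <-> exists a, fob (get F) a = x.
Proof. unfold img; destruct (excluded_middle_informative _); [tauto | split; [discriminate | tauto]]. Qed.

Lemma img_cod (A B : Cat) (F : Lens A B) f : img F (dom f) = true -> img F (cod f) = true.
Proof.
  rewrite !imgP. intros [a Ha]. exists (cod (put F a f)).
  rewrite <- fcod, put_get; auto.
Qed.

Definition tcod (A B : Cat) (F : Lens A B) (f : mor B) (t : bool) : bool :=
  t && negb (negb (img F (dom f)) && img F (cod f)).

Lemma tcod_comp (A B : Cat) (F : Lens A B) g f t : cod f = dom g ->
  tcod F (comp g f) t = tcod F g (tcod F f t).
Proof.
  intro H. unfold tcod. rewrite dom_comp, cod_comp by auto.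
  pose proof (@img_cod _ _ F f) as H1. pose proof (@img_cod _ _ F g) as H2.
  rewrite <- H in H2 |- *.
  destruct t, (img F (dom f)), (img F (cod f)), (img F (cod g)); simpl in *;
    auto; try (specialize (H1 eq_refl); discriminate);
    try (specialize (H2 eq_refl); discriminate).
Qed.

Lemma tcod_id (A B : Cat) (F : Lens A B) x t : tcod F (idm x) t = t.
Proof. unfold tcod. rewrite dom_idm, cod_idm. destruct t, (img F x); reflexivity. Qed.

Definition Cext (A B : Cat) (F : Lens A B) : Cat.
Proof.
  refine {| ob := ob B * bool; mor := mor B * bool;
    dom := fun p => (dom (fst p), snd p);
    cod := fun p => (cod (fst p), tcod F (fst p) (snd p));
    idm := fun x => (idm (fst x), snd x);
    comp := fun g f => (comp (fst g) (fst f), snd f) |}.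
  - intros [x t]; cbn; rewrite dom_idm; reflexivity.
  - intros [x t]; cbn; rewrite cod_idm, tcod_id; reflexivity.
  - intros [g s] [f t] H; cbn in *; injection H as H1 H2; rewrite dom_comp; auto.
  - intros [g s] [f t] H; cbn in *; injection H as H1 H2.
    rewrite cod_comp, tcod_comp by auto. rewrite H2; reflexivity.
  - intros [f t]; cbn; rewrite comp_idl; reflexivity.
  - intros [f t]; cbn; rewrite comp_idr; reflexivity.
  - intros [h r] [g s] [f t] H1 H2; cbn in *.
    injection H1 as H1 _. injection H2 as H2 _.
    rewrite comp_assoc; auto.
Defined.

Definition G0 (A B : Cat) (F : Lens A B) : Functor B (Cext F).
Proof.
  refine {| fob := fun x => (x, false) : ob (Cext F);
            fmor := fun f => (f, false) : mor (Cext F) |}.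
  - reflexivity.
  - reflexivity.
  - reflexivity.
  - reflexivity.
Defined.

Definition H0 (A B : Cat) (F : Lens A B) : Functor B (Cext F).
Proof.
  refine {| fob := fun x => (x, negb (img F x)) : ob (Cext F);
            fmor := fun f => (f, negb (img F (dom f))) : mor (Cext F) |}.
  - reflexivity.
  - intro f; cbn. f_equal. unfold tcod.
    pose proof (@img_cod _ _ F f).
    destruct (img F (dom f)), (img F (cod f)); simpl in *; auto;
    try (specialize (H eq_refl); discriminate).
  - intro x; cbn. rewrite dom_idm; reflexivity.
  - intros g f H; cbn. rewrite dom_comp; auto.
Defined.

Definition LG (A B : Cat) (F : Lens A B) : Lens B (Cext F).
Proof.
  refine {| get := G0 F; put := fun _ c => fst c |}.
  - intros a [f t] H; cbn in *. injection H as H1 H2; auto.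
  - intros a [f t] H; cbn in *. injection H as H1 H2; subst; reflexivity.
  - reflexivity.
  - reflexivity.
Defined.

Definition LH (A B : Cat) (F : Lens A B) : Lens B (Cext F).
Proof.
  refine {| get := H0 F; put := fun _ c => fst c |}.
  - intros a [f t] H; cbn in *. injection H as H1 H2; auto.
  - intros a [f t] H; cbn in *. injection H as H1 H2. rewrite H1, H2; reflexivity.
  - reflexivity.
  - reflexivity.
Defined.

Theorem corollary3p11 (A B : Cat) (F : Lens A B) :
  (lens_epi F <-> surj_ob (get F)) /\ (surj_ob (get F) <-> surj_mor (get F)).
Proof.
  split; [split | split].
  - intros Hepi y.
    destruct (classic (exists x, fob (get F) x = y)) as [Hy | Hy]; auto.
    exfalso.
    assert (E : lens_eq (LG F) (LH F)).
    { apply Hepi. split; [| split].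
      - intro x; cbn. f_equal. assert (img F (fob (get F) x) = true) as ->
          by (apply imgP; eauto). reflexivity.
      - intro f; cbn. f_equal. rewrite fdom.
        assert (img F (fob (get F) (dom f)) = true) as -> by (apply imgP; eauto).
        reflexivity.
      - reflexivity. }
    destruct E as [Eo _]. specialize (Eo y). cbn in Eo.
    injection Eo as Eo. unfold img in Eo.
    destruct (excluded_middle_informative _); [contradiction | discriminate].
  - intros Hs C G H [Hob [Hmor Hput]]. cbn in *.
    split; [| split].
    + intro y. destruct (Hs y) as [x <-]. apply Hob.
    + intro g. destruct (Hs (dom g)) as [x Hx].
      rewrite <- (@put_get _ _ F x g) by auto. apply Hmor.
    + intros a b Hb. destruct (Hs a) as [x <-].
      specialize (Hput x b Hb).
      rewrite <- (@put_get _ _ F x (put G (fob (get F) x) b)) by (apply put_dom; auto).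
      rewrite <- (@put_get _ _ F x (put H (fob (get F) x) b))
        by (apply put_dom; rewrite Hb; apply Hob).
      rewrite Hput; reflexivity.
  - intros Hs g. destruct (Hs (dom g)) as [x Hx].
    exists (put F x g). apply put_get; auto.
  - intros Hm y. destruct (Hm (idm y)) as [f Hf].
    exists (dom f). rewrite <- fdom, Hf, dom_idm; reflexivity.
Qed.
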